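(* For the relay Markov decision process described in the context, the optimal thresholds $(L_1^*,L_2^* )$ (of the optimal threshold policy: wait in state $(i,0)$ iff $i\le L_1^*$, wait in state $(0,j)$ iff $j\le L_2^*$, otherwise transmit) are $$(L_1^*,L_2^* )=\arg\min_{L_1,L_2} \; C_t\,\tau(L_1,L_2)+C_h\,\lambda(L_1,L_2),$$ where $$\tau(L_1,L_2)=p_1p_2\pi_{0,0}+p_2\sum_{i=1}^{L_1}\pi_{i,0}+p_1\sum_{j=1}^{L_2}\pi_{0,j}+p_1(1-p_2)\pi_{L_1,0}+p_2(1-p_1)\pi_{0,L_2},$$ $$\lambda(L_1,L_2)=\sum_{i=1}^{L_1} i\,\pi_{i,0}+\sum_{j=1}^{L_2} j\,\pi_{0,j},$$ with $$\pi_{0,0}=\frac{1}{\frac{1-\alpha^{L_1+1}}{1-\alpha}+\frac{1-1/\alpha^{L_2+1}}{1-1/\alpha}-1},\qquad \pi_{i,0}=\alpha^i\pi_{0,0},\qquad \pi_{0,j}=\pi_{0,0}/\alpha^j,\qquad \alpha=\frac{(1-p_2)p_1}{(1-p_1)p_2}.$$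
   Context: A relay node keeps two queues $q_1,q_2$. Time is slotted; in each slot a packet arrives to $q_i$ with probability $p_i\in(0,1)$ ($i=1,2$), independently across queues and slots, at most one per queue per slot. $Y_n=(Y_n^1,Y_n^2)$ is the number of packets in $(q_1,q_2)$ at the end of slot $n$ just before the transmission opportunity, and $A_n\in\{0,1\}$ is the action ($0$ = do nothing, $1$ = transmit; transmitting when both queues are nonempty sends one XOR-coded packet containing one packet from each queue, counted as one transmission). If $Y^1_n+Y^2_n=0$ then $A_n=0$; if $Y^1_nY^2_n>0$ then $A_n=1$. The state space is $\{(i,j)\in\mathbb{Z}_{\ge0}^2:\min(i,j)\le1\}$. With $\hat p_1=(1-p_1)(1-p_2)$, $\hat p_2=p_1(1-p_2)$, $\hat p_3=(1-p_1)p_2$, $\hat p_4=p_1p_2$, $[x]^+=\max(x,0)$: $P_1((i,j),([i-1]^+,[j-1]^+))=\hat p_1$, $P_1((i,j),(\max(i,1),[j-1]^+))=\hat p_2$, $P_1((i,j),([i-1]^+,\max(j,1)))=\hat p_3$, $P_1((i,j),(\max(i,1),\max(j,1)))=\hat p_4$, $P_0((i,j),(i,j))=\hat p_1$, $P_0((i,j),(i+1,j))=\hat p_2$, $P_0((i,j),(i,j+1))=\hat p_3$, $P_0((i,j),(i+1,j+1))=\hat p_4$. One-step cost: $C(Y_n,A_n)=C_h([Y^1_n-A_n]^+ + [Y^2_n-A_n]^+)+C_tA_n$, with transmission cost $C_t>0$ and per-slot holding cost $C_h>0$. The objective is the long-run average cost $V(u)=\lim_{N\to\infty}\frac{1}{N+1}E_u[\sum_{n=0}^N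 C(Y_n,A_n)\mid Y_0=(0,0)]$. The minimum over $(L_1,L_2)$ ranges over pairs of nonnegative integers. *)

(* Defs.v *)
From Stdlib Require Import Reals Lra Lia.
From Coquelicot Require Import Coquelicot.
Open Scope R_scope.

(* States (i,j) : number of packets in (q1,q2) just before the transmission
   opportunity.  Actions: 0 = wait, 1 = transmit. *)
Definition state := (nat * nat)%type.

Definition pb (p : R) (b : bool) : R := if b then p else 1 - p.

(* With probabilities pb p1 b1 * pb p2 b2 this realizes exactly the kernels
   P_1 (a = 1) and P_0 (a = 0) of the paper:
   (false,false) ~ hat p_1, (true,false) ~ hat p_2,
   (false,true) ~ hat p_3,  (true,true) ~ hat p_4.
   nat subtraction is truncated, so (i - 1)%nat = [i-1]^+. *)
Definition next (s : state) (a : nat) (b1 b2 : bool) : state :=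
  let (i, j) := s in
  if Nat.eqb a 0 then
    ((i + (if b1 then 1 else 0))%nat, (j + (if b2 then 1 else 0))%nat)
  else
    ((if b1 then Nat.max i 1 else (i - 1)%nat),
     (if b2 then Nat.max j 1 else (j - 1)%nat)).

Definition thr_policy (L1 L2 : nat) (s : state) : nat :=
  let (i, j) := s in
  if Nat.eqb (i + j) 0 then 0%nat
  else if Nat.ltb 0 (i * j) then 1%nat
  else if Nat.eqb j 0 then (if Nat.leb i L1 then 0%nat else 1%nat)
  else (if Nat.leb j L2 then 0%nat else 1%nat).

Definition cost (Ct Ch : R) (s : state) (a : nat) : R :=
  let (i, j) := s in
  Ch * (INR (i - a) + INR (j - a)) + Ct * INR a.

(* Expectation E[g(Y_n) | Y_0 = s] of the Markov chain driven by the
   stationary deterministic policy pol (first-step decomposition). *)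
Fixpoint expect (p1 p2 : R) (pol : state -> nat) (n : nat) (s : state)
  (g : state -> R) : R :=
  match n with
  | O => g s
  | S m =>
      let a := pol s in
      pb p1 false * pb p2 false * expect p1 p2 pol m (next s a false false) g
    + pb p1 true  * pb p2 false * expect p1 p2 pol m (next s a true false) g
    + pb p1 false * pb p2 true  * expect p1 p2 pol m (next s a false true) g
    + pb p1 true  * pb p2 true  * expect p1 p2 pol m (next s a true true) g
  end.

Definition avg_cost (p1 p2 Ct Ch : R) (pol : state -> nat) (N : nat) : R :=
  / INR (S N) *
  sum_f_R0 (fun n => expect p1 p2 pol n (0%nat, 0%nat)
                        (fun s => cost Ct Ch s (pol s))) N.

Definition V (p1 p2 Ct Ch : R) (pol : state -> nat) : R :=
  real (Lim_seq (avg_cost p1 p2 Ct Ch pol)).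

Definition V_thr (p1 p2 Ct Ch : R) (L1 L2 : nat) : R :=
  V p1 p2 Ct Ch (thr_policy L1 L2).

Fixpoint sum1 (f : nat -> R) (n : nat) : R :=
  match n with
  | O => 0
  | S m => sum1 f m + f (S m)
  end.

Definition alpha (p1 p2 : R) : R := ((1 - p2) * p1) / ((1 - p1) * p2).

Definition pi00 (p1 p2 : R) (L1 L2 : nat) : R :=
  let a := alpha p1 p2 in
  / ((1 - a ^ (L1 + 1)) / (1 - a) + (1 - / a ^ (L2 + 1)) / (1 - / a) - 1).

Definition pi_i0 (p1 p2 : R) (L1 L2 i : nat) : R :=
  alpha p1 p2 ^ i * pi00 p1 p2 L1 L2.

Definition pi_0j (p1 p2 : R) (L1 L2 j : nat) : R :=
  pi00 p1 p2 L1 L2 / alpha p1 p2 ^ j.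

Definition tau (p1 p2 : R) (L1 L2 : nat) : R :=
  p1 * p2 * pi00 p1 p2 L1 L2
  + p2 * sum1 (fun i => pi_i0 p1 p2 L1 L2 i) L1
  + p1 * sum1 (fun j => pi_0j p1 p2 L1 L2 j) L2
  + p1 * (1 - p2) * pi_i0 p1 p2 L1 L2 L1
  + p2 * (1 - p1) * pi_0j p1 p2 L1 L2 L2.

Definition lambda (p1 p2 : R) (L1 L2 : nat) : R :=
  sum1 (fun i => INR i * pi_i0 p1 p2 L1 L2 i) L1
  + sum1 (fun j => INR j * pi_0j p1 p2 L1 L2 j) L2.

Definition objective (p1 p2 Ct Ch : R) (L1 L2 : nat) : R :=
  Ct * tau p1 p2 L1 L2 + Ch * lambda p1 p2 L1 L2.

(* Main.v *)
Require Import Defs.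
From Stdlib Require Import Reals Lra Lia.
From Coquelicot Require Import Coquelicot.
Open Scope R_scope.

Definition step (p1 p2 : R) (pol : state -> nat) (f : state -> R) (s : state) : R :=
  let a := pol s in
      pb p1 false * pb p2 false * f (next s a false false)
    + pb p1 true  * pb p2 false * f (next s a true false)
    + pb p1 false * pb p2 true  * f (next s a false true)
    + pb p1 true  * pb p2 true  * f (next s a true true).

Lemma expect_S p1 p2 pol n : forall s f,
  expect p1 p2 pol (S n) s f = expect p1 p2 pol n s (step p1 p2 pol f).
Proof.
  induction n as [|n IH]; intros s f.
  - reflexivity.
  - change (expect p1 p2 pol (S (S n)) s f) with
      (let a := pol s in
      pb p1 false * pb p2 false * expect p1 p2 pol (S n) (next s a false false) f
    + pb p1 true  * pb p2 false * expect p1 p2 pol (S n) (next s a true false) f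
    + pb p1 false * pb p2 true  * expect p1 p2 pol (S n) (next s a false true) f
    + pb p1 true  * pb p2 true  * expect p1 p2 pol (S n) (next s a true true) f).
    cbv zeta. rewrite (IH (next s (pol s) false false) f), (IH (next s (pol s) true false) f),
      (IH (next s (pol s) false true) f), (IH (next s (pol s) true true) f). reflexivity.
Qed.

Section G.
Variables (p1 p2 : R) (pol : state -> nat) (InS : state -> Prop).
Hypothesis clos : forall s b1 b2, InS s -> InS (next s (pol s) b1 b2).

Lemma expect_ext n : forall s f f', (forall t, InS t -> f t = f' t) -> InS s ->
  expect p1 p2 pol n s f = expect p1 p2 pol n s f'.
Proof.
  induction n as [|n IH]; intros s f f' H Hs; simpl.
  - auto.
  - rewrite !(IH _ f f') by auto. reflexivity.
Qed.

Lemma psum : pb p1 false * pb p2 false + pb p1 true * pb p2 false +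
  pb p1 false * pb p2 true + pb p1 true * pb p2 true = 1.
Proof. unfold pb; ring. Qed.

Lemma expect_lin n : forall s f f' a b c,
  expect p1 p2 pol n s (fun t => a * f t + b * f' t + c) =
  a * expect p1 p2 pol n s f + b * expect p1 p2 pol n s f' + c.
Proof.
  induction n as [|n IH]; intros s f f' a b c; simpl.
  - reflexivity.
  - rewrite !IH. pose proof psum. 
    set (P1 := pb p1 false * pb p2 false) in *.
    set (P2 := pb p1 true * pb p2 false) in *.
    set (P3 := pb p1 false * pb p2 true) in *.
    set (P4 := pb p1 true * pb p2 true) in *.
    clearbody P1 P2 P3 P4. assert (P4 = 1 - P1 - P2 - P3) by lra. subst P4. ring.
Qed.

Hypothesis hp1 : 0 <= p1 <= 1.
Hypothesis hp2 : 0 <= p2 <= 1.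

Lemma expect_bound n : forall s f M, (forall t, InS t -> -M <= f t <= M) -> InS s ->
  -M <= expect p1 p2 pol n s f <= M.
Proof.
  induction n as [|n IH]; intros s f M H Hs; cbn [expect].
  - auto.
  - pose proof psum.
    assert (0 <= pb p1 false * pb p2 false) by (unfold pb; apply Rmult_le_pos; lra).
    assert (0 <= pb p1 true * pb p2 false) by (unfold pb; apply Rmult_le_pos; lra).
    assert (0 <= pb p1 false * pb p2 true) by (unfold pb; apply Rmult_le_pos; lra).
    assert (0 <= pb p1 true * pb p2 true) by (unfold pb; apply Rmult_le_pos; lra).
    set (P1 := pb p1 false * pb p2 false) in *.
    set (P2 := pb p1 true * pb p2 false) in *.
    set (P3 := pb p1 false * pb p2 true) in *.
    set (P4 := pb p1 true * pb p2 true) in *.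
    set (a := pol s).
    pose proof (IH (next s a false false) f M H (clos _ _ _ Hs)) as E1.
    pose proof (IH (next s a true false) f M H (clos _ _ _ Hs)) as E2.
    pose proof (IH (next s a false true) f M H (clos _ _ _ Hs)) as E3.
    pose proof (IH (next s a true true) f M H (clos _ _ _ Hs)) as E4.
    set (e1 := expect p1 p2 pol n (next s a false false) f) in *.
    set (e2 := expect p1 p2 pol n (next s a true false) f) in *.
    set (e3 := expect p1 p2 pol n (next s a false true) f) in *.
    set (e4 := expect p1 p2 pol n (next s a true true) f) in *.
    clearbody P1 P2 P3 P4 e1 e2 e3 e4.
    assert (HM : (P1+P2+P3+P4)*M = M) by (rewrite H0; ring).
    assert (P1*e1 <= P1*M) by (apply Rmult_le_compat_l; lra).
    assert (P2*e2 <= P2*M) by (apply Rmult_le_compat_l; lra).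
    assert (P3*e3 <= P3*M) by (apply Rmult_le_compat_l; lra).
    assert (P4*e4 <= P4*M) by (apply Rmult_le_compat_l; lra).
    assert (P1*(-M) <= P1*e1) by (apply Rmult_le_compat_l; lra).
    assert (P2*(-M) <= P2*e2) by (apply Rmult_le_compat_l; lra).
    assert (P3*(-M) <= P3*e3) by (apply Rmult_le_compat_l; lra).
    assert (P4*(-M) <= P4*e4) by (apply Rmult_le_compat_l; lra).
    split; lra.
Qed.

Variables (Ct Ch g M : R) (h : state -> R).
Hypothesis S0 : InS (0%nat, 0%nat).
Hypothesis hb : forall s, InS s -> -M <= h s <= M.
Hypothesis poisson : forall s, InS s ->
  h s + g = cost Ct Ch s (pol s) + step p1 p2 pol h s.

Lemma sum_tele N :
  sum_f_R0 (fun n => expect p1 p2 pol n (0%nat, 0%nat)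
                        (fun s => cost Ct Ch s (pol s))) N =
  INR (S N) * g + h (0%nat,0%nat) - expect p1 p2 pol (S N) (0%nat,0%nat) h.
Proof.
  assert (Hn : forall n, expect p1 p2 pol n (0%nat, 0%nat) (fun s => cost Ct Ch s (pol s))
     = expect p1 p2 pol n (0%nat,0%nat) h + g - expect p1 p2 pol (S n) (0%nat,0%nat) h).
  { intro n. rewrite expect_S.
    rewrite (expect_ext n _ _ (fun t => 1 * h t + (-1) * step p1 p2 pol h t + g)).
    - rewrite expect_lin. ring.
    - intros t Ht. pose proof (poisson t Ht). lra.
    - exact S0. }
  induction N as [|N IH].
  - cbn [sum_f_R0]. rewrite Hn.
    change (expect p1 p2 pol 0 (0%nat,0%nat) h) with (h (0%nat,0%nat)).
    replace (INR 1) with 1 by reflexivity. ring.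
  - cbn [sum_f_R0]. rewrite IH, Hn. rewrite (S_INR (S N)). ring.
Qed.

Lemma V_is_g : V p1 p2 Ct Ch pol = g.
Proof.
  unfold V.
  assert (L : is_lim_seq (avg_cost p1 p2 Ct Ch pol) g).
  { assert (Hinv : is_lim_seq (fun n => / INR (S n)) 0).
    { assert (H0 := is_lim_seq_INR).
      apply is_lim_seq_incr_1 in H0.
      pose proof (is_lim_seq_inv _ _ H0 ltac:(discriminate)) as H1. exact H1. }
    apply is_lim_seq_le_le with (u := fun n => g + (-(2*M)) * / INR (S n))
                                (w := fun n => g + (2*M) * / INR (S n)).
    - intro n. unfold avg_cost. rewrite sum_tele.
      assert (Hp : 0 < INR (S n)) by (apply lt_0_INR; lia).
      assert (Hi : 0 < / INR (S n)) by (apply Rinv_0_lt_compat; exact Hp).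
      pose proof (hb _ S0) as B0.
      pose proof (expect_bound (S n) (0%nat,0%nat) h M hb S0) as B1.
      set (e := expect p1 p2 pol (S n) (0%nat, 0%nat) h) in *.
      replace (/ INR (S n) * (INR (S n) * g + h (0%nat, 0%nat) - e)) with
        (g + (h (0%nat,0%nat) - e) * / INR (S n)) by (field; lra).
      split; nra.
    - assert (T := is_lim_seq_scal_l _ (-(2*M)) 0 Hinv). simpl in T.
      rewrite Rmult_0_r in T.
      pose proof (is_lim_seq_plus' _ _ g 0 (is_lim_seq_const g) T) as T2.
      rewrite Rplus_0_r in T2. exact T2.
    - assert (T := is_lim_seq_scal_l _ (2*M) 0 Hinv). simpl in T.
      rewrite Rmult_0_r in T.
      pose proof (is_lim_seq_plus' _ _ g 0 (is_lim_seq_const g) T) as T2.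
      rewrite Rplus_0_r in T2. exact T2. }
  rewrite (is_lim_seq_unique _ _ L). reflexivity.
Qed.
End G.

Ltac polcase := unfold thr_policy; repeat match goal with
 | |- context [Nat.eqb ?a ?b] => destruct (Nat.eqb_spec a b)
 | |- context [Nat.ltb ?a ?b] => destruct (Nat.ltb_spec a b)
 | |- context [Nat.leb ?a ?b] => destruct (Nat.leb_spec a b) end; try nia.

Section S.
Variables (L1 L2 : nat).
Definition pol := thr_policy L1 L2.

Lemma pol_le1 s : (pol s = 0 \/ pol s = 1)%nat.
Proof. destruct s as [i j]; unfold pol; polcase. Qed.
Lemma pol_si i : (i <= L1)%nat -> pol (i, 0%nat) = 0%nat.
Proof. intro; unfold pol; polcase. Qed.
Lemma pol_bi i : (L1 < i)%nat -> pol (i, 0%nat) = 1%nat.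
Proof. intro; unfold pol; polcase. Qed.
Lemma pol_sj j : (j <= L2)%nat -> pol (0%nat, j) = 0%nat.
Proof. intro; unfold pol; polcase. Qed.
Lemma pol_bj j : (L2 < j)%nat -> pol (0%nat, j) = 1%nat.
Proof. intro; unfold pol; polcase. Qed.
Lemma pol_both i j : (1 <= i)%nat -> (1 <= j)%nat -> pol (i, j) = 1%nat.
Proof. intros; unfold pol; polcase. Qed.

Definition addb (z : state) (b1 b2 : bool) : state :=
  ((if b1 then S (fst z) else fst z), (if b2 then S (snd z) else snd z)).
Definition post (s : state) : state := ((fst s - pol s)%nat, (snd s - pol s)%nat).

Lemma next_addb s b1 b2 : next s (pol s) b1 b2 = addb (post s) b1 b2.
Proof.
  destruct s as [i j]; unfold post, addb.
  destruct (pol_le1 (i,j)) as [E|E]; rewrite !E; unfold next; simpl fst; simpl snd;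
   simpl Nat.eqb; cbv iota; destruct b1, b2; f_equal; lia.
Qed.

Definition InS (s : state) : Prop :=
  ((snd s <= 1)%nat /\ (fst s <= L1 + 1)%nat) \/ ((fst s <= 1)%nat /\ (snd s <= L2 + 1)%nat).
Definition InP (z : state) : Prop :=
  (snd z = 0%nat /\ (fst z <= L1)%nat) \/ (fst z = 0%nat /\ (snd z <= L2)%nat).

Lemma post_InP s : InS s -> InP (post s).
Proof.
  destruct s as [i j]; unfold InS, InP, post, pol; simpl fst; simpl snd.
  intros H; polcase.
Qed.

Lemma addb_InS z b1 b2 : InP z -> InS (addb z b1 b2).
Proof. destruct z as [i j]; unfold InP, InS, addb; simpl; destruct b1, b2; simpl; lia. Qed.

Lemma clos s b1 b2 : InS s -> InS (next s (pol s) b1 b2).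
Proof. intro H; rewrite next_addb; apply addb_InS, post_InP, H. Qed.
End S.

Fixpoint rec (a b g : R) (X : nat -> R) (L t : nat) : R :=
  match t with O => 0 | S t' => (a * rec a b g X L t' - g + X (L - t')%nat) / b end.

Section S2.
Variables (p1 p2 Ct Ch g : R) (L1 L2 : nat).
Hypothesis hp1 : 0 < p1 < 1.
Hypothesis hp2 : 0 < p2 < 1.

Definition c (s : state) : R := cost Ct Ch s (pol L1 L2 s).
Definition Rz (z : state) : R :=
      pb p1 false * pb p2 false * c (addb z false false)
    + pb p1 true  * pb p2 false * c (addb z true false)
    + pb p1 false * pb p2 true  * c (addb z false true)
    + pb p1 true  * pb p2 true  * c (addb z true true).
Definition u := p1 * (1 - p2).
Definition d := (1 - p1) * p2.
Definition Er t := rec u d g (fun i => Rz (i, 0%nat)) L1 t.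
Definition El t := rec d u g (fun j => Rz (0%nat, j)) L2 t.
Definition E m := Er (L1 + 1 - m).
Definition F m := El (L2 + 1 - m).
Definition W (z : state) : R :=
  match snd z with O => sum1 E (fst z) | _ => sum1 F (snd z) end.

Lemma u_pos : 0 < u. Proof. unfold u; apply Rmult_lt_0_compat; lra. Qed.
Lemma d_pos : 0 < d. Proof. unfold d; apply Rmult_lt_0_compat; lra. Qed.

Lemma c_si i : (i <= L1)%nat -> c (i, 0%nat) = Ch * INR i.
Proof. intro H; unfold c, cost; rewrite pol_si by exact H.
  rewrite !Nat.sub_0_r; simpl INR; ring. Qed.
Lemma c_bi i : (L1 < i)%nat -> c (i, 0%nat) = Ch * INR (i - 1) + Ct.
Proof. intro H; unfold c, cost; rewrite pol_bi by exact H.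
  simpl (0 - 1)%nat; simpl INR; ring. Qed.
Lemma c_sj j : (j <= L2)%nat -> c (0%nat, j) = Ch * INR j.
Proof. intro H; unfold c, cost; rewrite pol_sj by exact H.
  rewrite !Nat.sub_0_r; simpl INR; ring. Qed.
Lemma c_bj j : (L2 < j)%nat -> c (0%nat, j) = Ch * INR (j - 1) + Ct.
Proof. intro H; unfold c, cost; rewrite pol_bj by exact H.
  simpl (0 - 1)%nat; simpl INR; ring. Qed.
Lemma c_both i j : (1 <= i)%nat -> (1 <= j)%nat -> c (i, j) = Ch * (INR (i - 1) + INR (j - 1)) + Ct.
Proof. intros H H'; unfold c, cost; rewrite pol_both by assumption.
  simpl INR; ring. Qed.

Lemma post_si i : (i <= L1)%nat -> post L1 L2 (i, 0%nat) = (i, 0%nat).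
Proof. intro H; unfold post; rewrite pol_si by exact H; simpl; f_equal; lia. Qed.
Lemma post_bi i : (L1 < i)%nat -> post L1 L2 (i, 0%nat) = ((i - 1)%nat, 0%nat).
Proof. intro H; unfold post; rewrite pol_bi by exact H; simpl; f_equal. Qed.
Lemma post_sj j : (j <= L2)%nat -> post L1 L2 (0%nat, j) = (0%nat, j).
Proof. intro H; unfold post; rewrite pol_sj by exact H; simpl; f_equal; lia. Qed.
Lemma post_bj j : (L2 < j)%nat -> post L1 L2 (0%nat, j) = (0%nat, (j - 1)%nat).
Proof. intro H; unfold post; rewrite pol_bj by exact H; simpl; f_equal. Qed.
Lemma post_both i j : (1 <= i)%nat -> (1 <= j)%nat -> post L1 L2 (i, j) = ((i - 1)%nat, (j - 1)%nat).
Proof. intros H H'; unfold post; rewrite pol_both by assumption; simpl; f_equal. Qed.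

Lemma W0j j : W (0%nat, j) = sum1 F j.
Proof. unfold W; simpl; destruct j; reflexivity. Qed.

Lemma E_rec i : (1 <= i <= L1)%nat -> d * E i = u * E (S i) - g + Rz (i, 0%nat).
Proof.
  intro H. unfold E, Er.
  replace (L1 + 1 - i)%nat with (S (L1 - i)) by lia.
  replace (L1 + 1 - S i)%nat with (L1 - i)%nat by lia.
  cbn [rec]. replace (L1 - (L1 - i))%nat with i by lia.
  pose proof d_pos. field. lra.
Qed.
Lemma F_rec j : (1 <= j <= L2)%nat -> u * F j = d * F (S j) - g + Rz (0%nat, j).
Proof.
  intro H. unfold F, El.
  replace (L2 + 1 - j)%nat with (S (L2 - j)) by lia.
  replace (L2 + 1 - S j)%nat with (L2 - j)%nat by lia.
  cbn [rec]. replace (L2 - (L2 - j))%nat with j by lia.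
  pose proof u_pos. field. lra.
Qed.
Lemma E_end : E (S L1) = 0.
Proof. unfold E. replace (L1 + 1 - S L1)%nat with 0%nat by lia. reflexivity. Qed.
Lemma F_end : F (S L2) = 0.
Proof. unfold F. replace (L2 + 1 - S L2)%nat with 0%nat by lia. reflexivity. Qed.

Definition QR (z : state) : R :=
  Rz z
  + pb p1 false * pb p2 false * W (post L1 L2 (addb z false false))
  + pb p1 true  * pb p2 false * W (post L1 L2 (addb z true false))
  + pb p1 false * pb p2 true  * W (post L1 L2 (addb z false true))
  + pb p1 true  * pb p2 true  * W (post L1 L2 (addb z true true)).

Lemma Q_right i : (1 <= i <= L1)%nat -> W (i, 0%nat) + g = QR (i, 0%nat).
Proof.
  intro H. destruct i as [|i]; [lia|].
  unfold QR, addb; cbn [fst snd].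
  rewrite (post_si (S i)) by lia.
  rewrite (post_both (S i) 1) by lia.
  rewrite (post_both (S (S i)) 1) by lia.
  replace (S i - 1)%nat with i by lia. replace (S (S i) - 1)%nat with (S i) by lia.
  replace (1 - 1)%nat with 0%nat by lia.
  assert (Wn : W (post L1 L2 (S (S i), 0%nat)) = sum1 E (S i) + E (S (S i))).
  { destruct (Compare_dec.le_lt_dec (S (S i)) L1) as [h|h].
    - rewrite post_si by exact h. unfold W; simpl. reflexivity.
    - rewrite post_bi by exact h. replace (S (S i) - 1)%nat with (S i) by lia.
      replace (S (S i)) with (S L1) by lia. rewrite E_end. unfold W; simpl. ring. }
  rewrite Wn. unfold W; cbn [fst snd sum1].
  pose proof (E_rec (S i) H) as ER.
  unfold u, d in ER. unfold pb.
  set (A := sum1 E i) in *. set (e1 := E (S i)) in *. set (e2 := E (S (S i))) in *.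
  set (R := Rz (S i, 0%nat)) in *.
  assert (Hg : g = R + p1 * (1 - p2) * e2 - (1 - p1) * p2 * e1) by lra.
  rewrite Hg. ring.
Qed.

Lemma Q_left j : (1 <= j <= L2)%nat -> W (0%nat, j) + g = QR (0%nat, j).
Proof.
  intro H. destruct j as [|j]; [lia|].
  unfold QR, addb; cbn [fst snd].
  rewrite (post_sj (S j)) by lia.
  rewrite (post_both 1 (S j)) by lia.
  rewrite (post_both 1 (S (S j))) by lia.
  replace (S j - 1)%nat with j by lia. replace (S (S j) - 1)%nat with (S j) by lia.
  replace (1 - 1)%nat with 0%nat by lia.
  assert (Wn : W (post L1 L2 (0%nat, S (S j))) = sum1 F (S j) + F (S (S j))).
  { destruct (Compare_dec.le_lt_dec (S (S j)) L2) as [h|h].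
    - rewrite post_sj by exact h. rewrite W0j. simpl. reflexivity.
    - rewrite post_bj by exact h. replace (S (S j) - 1)%nat with (S j) by lia.
      replace (S (S j)) with (S L2) by lia. rewrite F_end. rewrite W0j; simpl. ring. }
  rewrite Wn. rewrite !W0j; cbn [sum1].
  pose proof (F_rec (S j) H) as FR.
  unfold u, d in FR. unfold pb.
  set (A := sum1 F j) in *. set (e1 := F (S j)) in *. set (e2 := F (S (S j))) in *.
  set (R := Rz (0%nat, S j)) in *.
  assert (Hg : g = R + (1 - p1) * p2 * e2 - p1 * (1 - p2) * e1) by lra.
  rewrite Hg. ring.
Qed.

Lemma Q_zero : g = Rz (0%nat, 0%nat) + u * E 1 + d * F 1 ->
  W (0%nat, 0%nat) + g = QR (0%nat, 0%nat).
Proof.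
  intro B. unfold QR, addb; cbn [fst snd].
  rewrite (post_si 0) by lia. rewrite (post_both 1 1) by lia. simpl (1 - 1)%nat.
  assert (W1 : W (post L1 L2 (1%nat, 0%nat)) = E 1).
  { destruct (Nat.eq_dec L1 0) as [HL|HL].
    - rewrite post_bi by lia. simpl (1 - 1)%nat. unfold W; simpl.
      assert (E 1 = 0) by (rewrite <- E_end; f_equal; lia). lra.
    - rewrite post_si by lia. unfold W; simpl. ring. }
  assert (W2 : W (post L1 L2 (0%nat, 1%nat)) = F 1).
  { destruct (Nat.eq_dec L2 0) as [HL|HL].
    - rewrite post_bj by lia. simpl (1 - 1)%nat. unfold W; simpl.
      assert (F 1 = 0) by (rewrite <- F_end; f_equal; lia). lra.
    - rewrite post_sj by lia. rewrite W0j. simpl. ring. }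
  rewrite W1, W2. unfold W; simpl sum1. unfold u, d in B. unfold pb. simpl in B |- *. lra.
Qed.
End S2.

Lemma sum1_ext f g n : (forall i, (1 <= i <= n)%nat -> f i = g i) -> sum1 f n = sum1 g n.
Proof.
  induction n as [|n IH]; intro H; simpl; [reflexivity|].
  rewrite IH by (intros; apply H; lia). rewrite H by lia. reflexivity.
Qed.
Lemma sum1_lin f g x y n :
  sum1 (fun i => x * f i + y * g i) n = x * sum1 f n + y * sum1 g n.
Proof. induction n as [|n IH]; simpl; [ring| rewrite IH; ring]. Qed.
Lemma sum1_scal f x n : sum1 (fun i => x * f i) n = x * sum1 f n.
Proof. induction n as [|n IH]; simpl; [ring| rewrite IH; ring]. Qed.

Lemma geo x n : x <> 1 -> (1 - x ^ (n + 1)) / (1 - x) = 1 + sum1 (pow x) n.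
Proof.
  intro H.
  assert (K : (1 + sum1 (pow x) n) * (1 - x) = 1 - x ^ (n + 1)).
  { induction n as [|n IH]; [simpl; ring|]. cbn [sum1].
    replace ((1 + (sum1 (pow x) n + x ^ S n)) * (1 - x)) with
      ((1 + sum1 (pow x) n) * (1 - x) + x ^ S n * (1 - x)) by ring.
    rewrite IH. replace (S n + 1)%nat with (S (S n)) by lia.
    replace (n + 1)%nat with (S n) by lia.
    change (x ^ S (S n)) with (x * x ^ S n). ring. }
  rewrite <- K. field. lra.
Qed.

Lemma tele a b beta g X L : b <> 0 -> beta * b = a -> forall t, (t <= L)%nat ->
  sum1 (fun i => beta ^ i * (g - X i)) L - sum1 (fun i => beta ^ i * (g - X i)) (L - t)
  = - b * beta ^ (L + 1 - t) * rec a b g X L t.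
Proof.
  intros Hb Hab t. induction t as [|t IH]; intro Ht.
  - rewrite Nat.sub_0_r. simpl rec. ring.
  - set (k := (L - S t)%nat).
    assert (E1 : (L - t)%nat = S k) by (unfold k; lia).
    assert (E2 : (L + 1 - S t)%nat = S k) by (unfold k; lia).
    assert (E3 : (L + 1 - t)%nat = S (S k)) by (unfold k; lia).
    rewrite E2. cbn [rec]. rewrite E1.
    specialize (IH ltac:(lia)). rewrite E1, E3 in IH. cbn [sum1] in IH.
    replace (beta ^ S (S k)) with (beta * beta ^ S k) in IH by reflexivity.
    rewrite <- Hab in *.
    set (A := sum1 (fun i : nat => beta ^ i * (g - X i)) L) in *.
    set (B := sum1 (fun i : nat => beta ^ i * (g - X i)) k) in *.
    set (P := beta ^ S k) in *. set (r := rec (beta * b) b g X L t) in *.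
    set (x := X (S k)) in *.
    replace (- b * P * ((beta * b * r - g + x) / b)) with (- P * (beta * b * r - g + x))
      by (field; exact Hb).
    lra.
Qed.

Lemma tele_full a b beta g X L : b <> 0 -> beta * b = a ->
  sum1 (fun i => beta ^ i * (g - X i)) L = - a * rec a b g X L L.
Proof.
  intros Hb Hab. pose proof (tele a b beta g X L Hb Hab L (le_n _)) as T.
  rewrite Nat.sub_diag in T. replace (L + 1 - L)%nat with 1%nat in T by lia.
  subst a. cbn [sum1] in T. rewrite Rminus_0_r in T. rewrite T. simpl. ring.
Qed.

Lemma branch_aux Ch Ct a b beta q n : beta * b = a ->
  sum1 (fun i => beta ^ i * (Ch * INR i + Ct * q + Ch * (a - b))) n
  = Ch * sum1 (fun i => INR i * beta ^ i) n + Ct * q * sum1 (pow beta) n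
    + Ch * (b * beta ^ (S n) - b * beta).
Proof.
  intro H. subst a. induction n as [|n IH]; cbn [sum1].
  - simpl. ring.
  - rewrite IH. rewrite S_INR. simpl. ring.
Qed.

Lemma branch_sum Ch Ct a b beta q (R : nat -> R) L : beta * b = a ->
  (forall i, (1 <= i)%nat -> (i < L)%nat -> R i = Ch * INR i + Ct * q + Ch * (a - b)) ->
  ((1 <= L)%nat -> R L = Ch * INR L + Ct * (q + a) - Ch * b) ->
  sum1 (fun i => beta ^ i * R i) L
  = Ch * sum1 (fun i => INR i * beta ^ i) L + Ct * q * sum1 (pow beta) L
    + match L with O => 0 | _ => Ct * a * beta ^ L - Ch * a end.
Proof.
  intros Hab Hm He. destruct L as [|L]; [simpl; ring|].
  cbn [sum1].
  rewrite (sum1_ext _ (fun i => beta ^ i * (Ch * INR i + Ct * q + Ch * (a - b)))).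
  2:{ intros i Hi. rewrite Hm by lia. reflexivity. }
  rewrite branch_aux by exact Hab. rewrite He by lia.
  rewrite <- Hab. ring.
Qed.

Lemma Rz_rm p1 p2 Ct Ch L1 L2 i : (1 <= i)%nat -> (i < L1)%nat ->
  Rz p1 p2 Ct Ch L1 L2 (i, 0%nat) = Ch * INR i + Ct * p2 + Ch * (u p1 p2 - d p1 p2).
Proof.
  intros H1 H2. unfold Rz, addb; cbn [fst snd].
  rewrite (c_si Ct Ch L1 L2 i) by lia. rewrite (c_si Ct Ch L1 L2 (S i)) by lia.
  rewrite !c_both by lia. destruct i as [|i]; [lia|].
  replace (S i - 1)%nat with i by lia. replace (S (S i) - 1)%nat with (S i) by lia.
  replace (1 - 1)%nat with 0%nat by lia.
  unfold pb, u, d. rewrite !S_INR. simpl INR. ring.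
Qed.
Lemma Rz_re p1 p2 Ct Ch L1 L2 : (1 <= L1)%nat ->
  Rz p1 p2 Ct Ch L1 L2 (L1, 0%nat) = Ch * INR L1 + Ct * (p2 + u p1 p2) - Ch * d p1 p2.
Proof.
  intros H1. unfold Rz, addb; cbn [fst snd].
  rewrite (c_si Ct Ch L1 L2 L1) by lia. rewrite (c_bi Ct Ch L1 L2 (S L1)) by lia.
  rewrite !c_both by lia. 
  replace (S L1 - 1)%nat with L1 by lia.
  replace (1 - 1)%nat with 0%nat by lia.
  destruct L1 as [|l]; [lia|].
  replace (S l - 1)%nat with l by lia.
  unfold pb, u, d. rewrite !S_INR. simpl INR. ring.
Qed.
Lemma Rz_lm p1 p2 Ct Ch L1 L2 j : (1 <= j)%nat -> (j < L2)%nat ->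
  Rz p1 p2 Ct Ch L1 L2 (0%nat, j) = Ch * INR j + Ct * p1 + Ch * (d p1 p2 - u p1 p2).
Proof.
  intros H1 H2. unfold Rz, addb; cbn [fst snd].
  rewrite (c_sj Ct Ch L1 L2 j) by lia. rewrite (c_sj Ct Ch L1 L2 (S j)) by lia.
  rewrite !c_both by lia. destruct j as [|j]; [lia|].
  replace (S j - 1)%nat with j by lia. replace (S (S j) - 1)%nat with (S j) by lia.
  replace (1 - 1)%nat with 0%nat by lia.
  unfold pb, u, d. rewrite !S_INR. simpl INR. ring.
Qed.
Lemma Rz_le p1 p2 Ct Ch L1 L2 : (1 <= L2)%nat ->
  Rz p1 p2 Ct Ch L1 L2 (0%nat, L2) = Ch * INR L2 + Ct * (p1 + d p1 p2) - Ch * u p1 p2.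
Proof.
  intros H1. unfold Rz, addb; cbn [fst snd].
  rewrite (c_sj Ct Ch L1 L2 L2) by lia. rewrite (c_bj Ct Ch L1 L2 (S L2)) by lia.
  rewrite !c_both by lia. 
  replace (S L2 - 1)%nat with L2 by lia.
  replace (1 - 1)%nat with 0%nat by lia.
  destruct L2 as [|l]; [lia|].
  replace (S l - 1)%nat with l by lia.
  unfold pb, u, d. rewrite !S_INR. simpl INR. ring.
Qed.
Lemma Rz_00 p1 p2 Ct Ch L1 L2 :
  Rz p1 p2 Ct Ch L1 L2 (0%nat, 0%nat) =
  u p1 p2 * (match L1 with O => Ct | _ => Ch end)
  + d p1 p2 * (match L2 with O => Ct | _ => Ch end) + p1 * p2 * Ct.
Proof.
  unfold Rz, addb; cbn [fst snd].
  rewrite (c_si Ct Ch L1 L2 0) by lia. rewrite (c_both Ct Ch L1 L2 1 1) by lia.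
  assert (A : c Ct Ch L1 L2 (1%nat, 0%nat) = match L1 with O => Ct | _ => Ch end).
  { destruct L1 as [|l].
    - rewrite c_bi by lia. simpl. ring.
    - rewrite c_si by lia. simpl. ring. }
  assert (B : c Ct Ch L1 L2 (0%nat, 1%nat) = match L2 with O => Ct | _ => Ch end).
  { destruct L2 as [|l].
    - rewrite c_bj by lia. simpl. ring.
    - rewrite c_sj by lia. simpl. ring. }
  rewrite A, B. simpl (1 - 1)%nat. simpl INR. unfold pb, u, d. ring.
Qed.

Lemma match_fix Ct Ch beta w L :
  w * (match L with O => Ct | _ => Ch end) + match L with O => 0 | _ => Ct * w * beta ^ L - Ch * w end
  = Ct * w * beta ^ L.
Proof. destruct L; simpl; ring. Qed.

Lemma sum1_pow_nonneg x n : 0 < x -> 0 <= sum1 (pow x) n.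
Proof.
  intro H. induction n as [|n IH]; simpl; [lra|].
  pose proof (pow_lt x n H). nra.
Qed.

Lemma sum1_gX beta g X n :
  sum1 (fun i => beta ^ i * (g - X i)) n = g * sum1 (pow beta) n - sum1 (fun i => beta ^ i * X i) n.
Proof. induction n as [|n IH]; simpl; [ring|]. rewrite IH. ring. Qed.

Lemma balance p1 p2 Ct Ch L1 L2 :
  0 < p1 < 1 -> 0 < p2 < 1 -> p1 <> p2 ->
  let g := objective p1 p2 Ct Ch L1 L2 in
  g = Rz p1 p2 Ct Ch L1 L2 (0%nat, 0%nat) + u p1 p2 * E p1 p2 Ct Ch g L1 L2 1
      + d p1 p2 * F p1 p2 Ct Ch g L1 L2 1.
Proof.
  intros hp1 hp2 hp12 g.
  set (al := alpha p1 p2).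
  pose proof (u_pos p1 p2 hp1 hp2) as Hu. pose proof (d_pos p1 p2 hp1 hp2) as Hd.
  assert (Hal : al * d p1 p2 = u p1 p2).
  { unfold al, alpha, u, d. field. split; lra. }
  assert (Halpos : 0 < al).
  { unfold al, alpha. apply Rdiv_lt_0_compat; apply Rmult_lt_0_compat; lra. }
  assert (Hal1 : al <> 1).
  { intro H1. rewrite H1 in Hal. unfold u, d in Hal. apply hp12. nra. }
  assert (Hial : / al * u p1 p2 = d p1 p2).
  { rewrite <- Hal. field. lra. }
  assert (Hial1 : / al <> 1).
  { intro H1. apply Hal1. rewrite <- (Rinv_inv al). rewrite H1. apply Rinv_1. }
  assert (TE : u p1 p2 * E p1 p2 Ct Ch g L1 L2 1 =
     - sum1 (fun i => al ^ i * (g - Rz p1 p2 Ct Ch L1 L2 (i, 0%nat))) L1).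
  { unfold E, Er. replace (L1 + 1 - 1)%nat with L1 by lia.
    rewrite (tele_full (u p1 p2) (d p1 p2) al g (fun i => Rz p1 p2 Ct Ch L1 L2 (i, 0%nat)) L1)
      by (lra || exact Hal). ring. }
  assert (TF : d p1 p2 * F p1 p2 Ct Ch g L1 L2 1 =
     - sum1 (fun j => (/ al) ^ j * (g - Rz p1 p2 Ct Ch L1 L2 (0%nat, j))) L2).
  { unfold F, El. replace (L2 + 1 - 1)%nat with L2 by lia.
    rewrite (tele_full (d p1 p2) (u p1 p2) (/ al) g (fun j => Rz p1 p2 Ct Ch L1 L2 (0%nat, j)) L2)
      by (lra || exact Hial). ring. }
  rewrite TE, TF, !sum1_gX.
  rewrite (branch_sum Ch Ct (u p1 p2) (d p1 p2) al p2 (fun i => Rz p1 p2 Ct Ch L1 L2 (i, 0%nat)) L1 Hal).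
  2:{ intros i H1 H2. apply Rz_rm; assumption. }
  2:{ intros H1. rewrite Rz_re by exact H1. ring. }
  rewrite (branch_sum Ch Ct (d p1 p2) (u p1 p2) (/ al) p1 (fun j => Rz p1 p2 Ct Ch L1 L2 (0%nat, j)) L2 Hial).
  2:{ intros j H1 H2. apply Rz_lm; assumption. }
  2:{ intros H1. rewrite Rz_le by exact H1. ring. }
  rewrite Rz_00.
  assert (Gdef : g = pi00 p1 p2 L1 L2 *
     (Ct * (p1 * p2 + p2 * sum1 (pow al) L1 + p1 * sum1 (pow (/ al)) L2
            + u p1 p2 * al ^ L1 + d p1 p2 * (/ al) ^ L2)
      + Ch * (sum1 (fun i => INR i * al ^ i) L1 + sum1 (fun j => INR j * (/ al) ^ j) L2))).
  { unfold g, objective, tau, lambda, pi_i0, pi_0j. fold al.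
    set (P := pi00 p1 p2 L1 L2).
    rewrite (sum1_ext (fun i => al ^ i * P) (fun i => P * pow al i)) by (intros; ring).
    rewrite (sum1_ext (fun j => P / al ^ j) (fun j => P * pow (/ al) j))
      by (intros; unfold Rdiv; rewrite pow_inv; ring).
    rewrite (sum1_ext (fun i => INR i * (al ^ i * P)) (fun i => P * (INR i * al ^ i))) by (intros; ring).
    rewrite (sum1_ext (fun j => INR j * (P / al ^ j)) (fun j => P * (INR j * (/ al) ^ j)))
      by (intros; unfold Rdiv; rewrite pow_inv; ring).
    rewrite !sum1_scal. unfold Rdiv. rewrite <- pow_inv. unfold u, d. ring. }
  assert (Pdef : pi00 p1 p2 L1 L2 * (1 + sum1 (pow al) L1 + sum1 (pow (/ al)) L2) = 1).
  { unfold pi00. fold al. rewrite geo by exact Hal1. rewrite <- pow_inv. rewrite geo by exact Hial1.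
    pose proof (sum1_pow_nonneg al L1 Halpos).
    pose proof (sum1_pow_nonneg (/ al) L2 (Rinv_0_lt_compat _ Halpos)).
    field. lra. }
  pose proof (match_fix Ct Ch al (u p1 p2) L1) as M1.
  pose proof (match_fix Ct Ch (/ al) (d p1 p2) L2) as M2.
  set (P := pi00 p1 p2 L1 L2) in *.
  set (SA := sum1 (pow al) L1) in *. set (SB := sum1 (pow (/ al)) L2) in *.
  set (IA := sum1 (fun i => INR i * al ^ i) L1) in *.
  set (IB := sum1 (fun j => INR j * (/ al) ^ j) L2) in *.
  set (mA := match L1 with O => Ct | _ => Ch end) in *.
  set (mB := match L2 with O => Ct | _ => Ch end) in *.
  set (nA := match L1 with O => 0 | _ => Ct * u p1 p2 * al ^ L1 - Ch * u p1 p2 end) in *.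
  set (nB := match L2 with O => 0 | _ => Ct * d p1 p2 * (/ al) ^ L2 - Ch * d p1 p2 end) in *.
  set (aL := al ^ L1) in *. set (bL := (/ al) ^ L2) in *.
  set (U := u p1 p2) in *. set (D := d p1 p2) in *.
  clearbody P SA SB IA IB mA mB nA nB aL bL U D g.
  assert (g * (1 + SA + SB) = Ct * (p1 * p2 + p2 * SA + p1 * SB + U * aL + D * bL) + Ch * (IA + IB)).
  { rewrite Gdef. transitivity ((P * (1 + SA + SB)) * (Ct * (p1 * p2 + p2 * SA + p1 * SB + U * aL + D * bL) + Ch * (IA + IB))); [ring|].
    rewrite Pdef. ring. }
  nra.
Qed.

Lemma finite_bound (f : nat -> R) N : exists M, forall i, (i <= N)%nat -> -M <= f i <= M.
Proof.
  induction N as [|N [M HM]].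
  - exists (Rabs (f 0%nat)). intros i Hi. replace i with 0%nat by lia.
    unfold Rabs; destruct Rcase_abs; lra.
  - exists (Rmax M (Rabs (f (S N)))). intros i Hi.
    pose proof (Rmax_l M (Rabs (f (S N)))). pose proof (Rmax_r M (Rabs (f (S N)))).
    destruct (Nat.eq_dec i (S N)) as [->|ne].
    + revert H0. unfold Rabs; destruct Rcase_abs; intros; lra.
    + specialize (HM i ltac:(lia)). lra.
Qed.

Lemma V_thr_obj p1 p2 Ct Ch L1 L2 : 0 < p1 < 1 -> 0 < p2 < 1 -> p1 <> p2 ->
  V_thr p1 p2 Ct Ch L1 L2 = objective p1 p2 Ct Ch L1 L2.
Proof.
  intros hp1 hp2 hp12.
  set (g := objective p1 p2 Ct Ch L1 L2).
  set (h := fun s => c Ct Ch L1 L2 s + W p1 p2 Ct Ch g L1 L2 (post L1 L2 s)).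
  destruct (finite_bound (fun i => h (i, 0%nat)) (L1 + 1)) as [M1 H1].
  destruct (finite_bound (fun i => h (i, 1%nat)) (L1 + 1)) as [M2 H2].
  destruct (finite_bound (fun j => h (0%nat, j)) (L2 + 1)) as [M3 H3].
  destruct (finite_bound (fun j => h (1%nat, j)) (L2 + 1)) as [M4 H4].
  set (M := Rmax (Rmax M1 M2) (Rmax M3 M4)).
  assert (HB : forall s, InS L1 L2 s -> -M <= h s <= M).
  { intros [i j] Hs. unfold InS in Hs; simpl in Hs.
    pose proof (Rmax_l M1 M2). pose proof (Rmax_r M1 M2).
    pose proof (Rmax_l M3 M4). pose proof (Rmax_r M3 M4).
    pose proof (Rmax_l (Rmax M1 M2) (Rmax M3 M4)). pose proof (Rmax_r (Rmax M1 M2) (Rmax M3 M4)).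
    unfold M.
    destruct Hs as [[Hj Hi]|[Hi Hj]].
    - destruct (Nat.eq_dec j 0) as [E0|E0].
      + subst j. specialize (H1 i Hi). cbv beta in H1. lra.
      + assert (j = 1%nat) by lia. subst j. specialize (H2 i Hi). cbv beta in H2. lra.
    - destruct (Nat.eq_dec i 0) as [E0|E0].
      + subst i. specialize (H3 j Hj). cbv beta in H3. lra.
      + assert (i = 1%nat) by lia. subst i. specialize (H4 j Hj). cbv beta in H4. lra. }
  unfold V_thr. change (thr_policy L1 L2) with (pol L1 L2).
  apply (V_is_g p1 p2 (pol L1 L2) (InS L1 L2) (clos L1 L2) ltac:(lra) ltac:(lra) Ct Ch g M h).
  - unfold InS; simpl; lia.
  - exact HB.
  - intros s Hs. unfold step. rewrite !next_addb.
    pose proof (post_InP L1 L2 s Hs) as HP.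
    set (z := post L1 L2 s) in *.
    assert (HQ : W p1 p2 Ct Ch g L1 L2 z + g = QR p1 p2 Ct Ch g L1 L2 z).
    { destruct z as [i j]. unfold InP in HP; simpl in HP.
      destruct HP as [[-> Hi]|[-> Hj]].
      - destruct (Nat.eq_dec i 0) as [->|].
        + apply Q_zero. apply balance; assumption.
        + apply Q_right; [exact hp1|exact hp2|lia].
      - destruct (Nat.eq_dec j 0) as [->|].
        + apply Q_zero. apply balance; assumption.
        + apply Q_left; [exact hp1|exact hp2|lia]. }
    unfold QR, Rz in HQ. unfold h.
    change (cost Ct Ch s (pol L1 L2 s)) with (c Ct Ch L1 L2 s).
    fold z. lra.
Qed.

Theorem theorem4 (p1 p2 Ct Ch : R)
  (hp1 : 0 < p1 < 1) (hp2 : 0 < p2 < 1) (hp12 : p1 <> p2)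
  (hCt : 0 < Ct) (hCh : 0 < Ch) (L1s L2s : nat) :
  (forall L1 L2 : nat, V_thr p1 p2 Ct Ch L1s L2s <= V_thr p1 p2 Ct Ch L1 L2)
  <->
  (forall L1 L2 : nat, objective p1 p2 Ct Ch L1s L2s <= objective p1 p2 Ct Ch L1 L2).
Proof.
  split; intros H L1 L2; specialize (H L1 L2);
    rewrite !V_thr_obj in * by assumption; exact H.
Qed.
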